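(* Let $L$ be a positive integer and $A\in\mathbb{Z}_L^{2\times 2}$. Then there exist $s_0,s_1\in\mathbb{Z}_L$, a diagonal matrix $D\in\mathbb{Z}_L^{2\times2}$ and a matrix $V\in\mathbb{Z}_L^{2\times2}$ with $\det(V)=\pm1$ in $\mathbb{Z}_L$, such that $$A=U_{s_0,s_1}DV,\qquad\text{where } U_{s_0,s_1}=S_{-s_1}F^{-1}S_{s_0}F=\begin{pmatrix}1&-s_0\\-s_1&s_0s_1+1\end{pmatrix}.$$
   Context: All matrix arithmetic is modulo $L$. $F=\begin{pmatrix}0&-1\\1&0\end{pmatrix}$ and, for $c\in\mathbb{Z}_L$, $S_c=\begin{pmatrix}1&0\\c&1\end{pmatrix}$. *)

(* Defs.v *)
From mathcomp Require Import all_boot all_order all_algebra.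
Set Implicit Arguments. Unset Strict Implicit. Unset Printing Implicit Defensive.
Import GRing.Theory Num.Theory.
Local Open Scope ring_scope.

(* Z_L is modelled by integers taken modulo L (works uniformly for every
   L > 0, including L = 1, unlike mathcomp's 'Z_L which needs L >= 2).
   A 2x2 matrix over Z_L is represented by an integer matrix; matrix
   identities in Z_L are entrywise congruences modulo L. *)

Definition mx_eqmod (L : nat) (X Y : 'M[int]_2) : Prop :=
  forall i j : 'I_2, (X i j = Y i j %[mod L%:Z])%Z.

Definition Fmx : 'M[int]_2 :=
  \matrix_(i < 2, j < 2)
    (if (i == 0%N :> nat) && (j == 1%N :> nat) then -1
     else if (i == 1%N :> nat) && (j == 0%N :> nat) then 1 else 0).

Definition Smx (c : int) : 'M[int]_2 :=
  \matrix_(i < 2, j < 2)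
    (if i == j then 1
     else if (i == 1%N :> nat) && (j == 0%N :> nat) then c else 0).

Definition Umx (s0 s1 : int) : 'M[int]_2 :=
  Smx (- s1) *m invmx Fmx *m Smx s0 *m Fmx.

Definition is_diag2 (D : 'M[int]_2) : Prop := D 0 1 = 0 /\ D 1 0 = 0.

(* Main.v *)
Require Import Defs.
From mathcomp Require Import all_boot all_order all_algebra.
From mathcomp Require Import ring.
Import GRing.Theory Num.Theory.
Local Open Scope ring_scope.

Lemma mul22 (R : pzSemiRingType) (X Y : 'M[R]_2) i j : (X *m Y) i j = X i 0 * Y 0 j + X i 1 * Y 1 j.
Proof.
rewrite mxE !big_ord_recl big_ord0 addr0.
by have -> : lift ord0 (ord0 : 'I_1) = 1 by apply/val_inj.
Qed.

Lemma det22 (R : comPzRingType) (X : 'M[R]_2) : \det X = X 0 0 * X 1 1 - X 0 1 * X 1 0.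
Proof.
rewrite (expand_det_row _ 0) !big_ord_recl big_ord0 addr0 /cofactor !det_mx11 !mxE /=.
rewrite !expr0 !expr1 mul1r mulN1r.
have -> : lift 0 (0 : 'I_1) = 1 by apply/val_inj.
have -> : lift 1 (0 : 'I_1) = 0 by apply/val_inj.
have -> : (ord0 : 'I_2) = 0 by apply/val_inj.
by rewrite mulrN.
Qed.

Lemma unit_int (x : int) : x \is a GRing.unit -> x = 1 \/ x = -1.
Proof. by move=> /orP [/eqP|/eqP]; auto. Qed.

Lemma invF : invmx Fmx = \matrix_(i < 2, j < 2)
    (if (i == 0%N :> nat) && (j == 1%N :> nat) then 1
     else if (i == 1%N :> nat) && (j == 0%N :> nat) then -1 else 0).
Proof.
set G := \matrix_(_,_) _.
have FG : Fmx *m G = 1%:M.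
  apply/matrixP => i j; rewrite mul22 !mxE.
  by case: i => [[|[|]]] //= ?; case: j => [[|[|]]] //= ?.
have uF : Fmx \in unitmx.
  by rewrite unitmxE det22 !mxE.
by rewrite -[G]mul1mx -(mulVmx uF) -mulmxA FG mulmx1.
Qed.

Lemma Uent s0 s1 : Umx s0 s1 = \matrix_(i < 2, j < 2)
   (if i == 0 :> nat then (if j == 0 :> nat then 1 else - s0)
    else (if j == 0 :> nat then - s1 else s0 * s1 + 1)).
Proof.
apply/matrixP => i j; rewrite /Umx invF !mul22 !mxE.
by case: i => [[|[|]]] //= ?; case: j => [[|[|]]] //= ?; ring.
Qed.
Lemma stable_cop (L : nat) (p r u v : int) : (0 < L)%N -> u * p + v * r = 1 ->
  exists s : int, coprime `|s * p + r| L.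
Proof.
move=> L0 Huv.
have [r00|r0] := eqVneq r 0.
  exists u; rewrite r00 addr0; move: Huv; rewrite r00 mulr0 addr0 => ->.
  exact: coprime1n.
set pi := \pi(`|r|%N).
exists (L`_(pi^'))%:Z.
set x := _ + r.
apply/negPn/negP => ncop.
have g0 : (0 < gcdn `|x| L)%N by rewrite gcdn_gt0 L0 orbT.
have g1 : (1 < gcdn `|x| L)%N by move: ncop g0; rewrite /coprime; case: (gcdn _ _) => [|[|]].
pose q := pdiv (gcdn `|x| L).
have qp : prime q by apply: pdiv_prime.
have qg : (q %| gcdn `|x| L)%N by apply: pdiv_dvd.
have qx : (q%:Z %| x)%Z by rewrite dvdzE absz_nat (dvdn_trans qg) ?dvdn_gcdl.
have qL : (q %| L)%N by rewrite (dvdn_trans qg) ?dvdn_gcdr.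
have ra : (0 < `|r|)%N by rewrite absz_gt0.
have sp0 : (0 < L`_(pi^'))%N by apply: part_gt0.
case qr : (q \in pi).
  have qrd : (q%:Z %| r)%Z by rewrite dvdzE absz_nat; move: qr; rewrite /pi mem_primes => /and3P[].
  have qsp : (q%:Z %| (L`_(pi^'))%:Z * p)%Z.
    rewrite (_ : (L`_(pi^'))%:Z * p = x - r); last by rewrite /x; ring.
    by rewrite rpredB.
  move: qsp; rewrite dvdzE abszM absz_nat absz_nat Euclid_dvdM // => /orP[qs|qpd].
    have : q \in \pi((L`_(pi^'))%N) by rewrite mem_primes qp sp0 qs.
    by move/(pnatPpi (part_pnat _ _)); rewrite !inE qr.
  have : (q%:Z %| u * p + v * r)%Z.
    by rewrite rpredD ?dvdz_mull // dvdzE absz_nat.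
  rewrite Huv dvdzE absz_nat dvdn1 => /eqP q1.
  by move: qp; rewrite q1.
have qpi : (pi^').-nat q by rewrite pnatE // !inE qr.
have : (q %| L`_(pi^'))%N by rewrite -{1}(part_pnat_id qpi) partn_dvd.
move=> qs.
have qrd : (q%:Z %| r)%Z.
  rewrite (_ : r = x - (L`_(pi^'))%:Z * p); last by rewrite /x; ring.
  by rewrite rpredB // dvdz_mulr // dvdzE absz_nat.
move: qr; rewrite /pi mem_primes qp ra /=.
by move: qrd; rewrite dvdzE absz_nat => ->.
Qed.

Lemma stable (L : nat) (p r u v : int) : (0 < L)%N -> u * p + v * r = 1 ->
  exists s y k : int, (s * p + r)*y = 1 + L%:Z * k.
Proof.
move=> L0 Huv; have [s cop] := @stable_cop L p r u v L0 Huv.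
have [a [b Hab]] := Bezoutz (s * p + r) L%:Z.
exists s, a, (- b).
have : gcdz (s * p + r) L%:Z = 1.
  by rewrite /gcdz absz_nat (eqP cop).
move=> g; rewrite g in Hab.
rewrite -Hab; ring.
Qed.

Lemma ord2 (i : 'I_2) : i = 0 \/ i = 1.
Proof. by case: i => [[|[|]]] // ?; [left|right]; apply/val_inj. Qed.

Lemma eqmodL (L : nat) (a b c : int) : a = b + L%:Z * c -> (a = b %[mod L%:Z])%Z.
Proof. by move=> ->; rewrite addrC mulrC modzMDl. Qed.

Theorem theorem3p5 (L : nat) (HL : (0 < L)%N) (A : 'M[int]_2) :
  exists (s0 s1 : int) (D V : 'M[int]_2),
    is_diag2 D /\
    ((\det V = 1 %[mod L%:Z])%Z \/ (\det V = -1 %[mod L%:Z])%Z) /\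
    mx_eqmod L A (Umx s0 s1 *m D *m V).
Proof.
have [P uP [Q uQ [d sd HA]]] := int_Smith_normal_form A.
have [m Hm] : exists m, d`_1 = m * d`_0.
  case: d sd {HA} => [|a [|b t]] /=; first by exists 0; rewrite mul0r.
    by exists 0; rewrite mul0r.
  by case/andP => /dvdzP [q ->] _; exists q.
set l1 := d`_0 in Hm *.
have [e [He e2]] : exists e, \det P = e /\ e * e = 1.
  by exists (\det P); split => //; move: uP; rewrite unitmxE => /unit_int [->|->].
have [eQ [HeQ eQ2]] : exists e, \det Q = e /\ e * e = 1.
  by exists (\det Q); split => //; move: uQ; rewrite unitmxE => /unit_int [->|->].
rewrite det22 in He.
set p := P 0 0 in He *; set q0 := P 0 1 in He *; set r := P 1 0 in He *; set r1 := P 1 1 in He *.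
have Huv : (e * r1) * p + (- e * q0) * r = 1.
  have -> : e * r1 * p + - e * q0 * r = e * (p * r1 - q0 * r) by ring.
  by rewrite He.
have [s1 [y [k Hx]]] := @stable L p r (e * r1) (- e * q0) HL Huv.
set x := s1 * p + r in Hx.
pose s0 := - p * y.
pose w12 := (s0 * s1 + 1) * q0 + s0 * r1.
pose w22 := s1 * q0 + r1.
have hx : p + s0 * x = L%:Z * (- p * k).
  have -> : p + s0 * x = p - p * (x * y) by rewrite /s0; ring.
  by rewrite Hx; ring.
pose D : 'M[int]_2 := \matrix_(i < 2, j < 2)
   (if i == 0 :> nat then (if j == 0 :> nat then m * l1 else 0)
    else (if j == 0 :> nat then 0 else l1)).
pose V0 : 'M[int]_2 := \matrix_(i < 2, j < 2)
   (if i == 0 :> nat then (if j == 0 :> nat then 0 else w12)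
    else (if j == 0 :> nat then x else m * w22)).
exists s0, s1, D, (V0 *m Q).
split; first by rewrite /is_diag2 !mxE.
split.
  have hdet : \det V0 = e + L%:Z * (p * k * w22).
    rewrite det22 !mxE /=.
    have : (p + s0 * x) * w22 - w12 * x = e.
      by rewrite -He /w12 /w22 /x; ring.
    rewrite hx => <-; ring.
  rewrite det_mulmx hdet HeQ.
  have ueQ : (e * eQ) * (e * eQ) = 1.
    by rewrite mulrACA e2 eQ2 mulr1.
  have /unit_int [h|h] : e * eQ \is a GRing.unit.
    by apply/unitrP; exists (e * eQ).
    left; apply: (@eqmodL L _ _ (p * k * w22 * eQ)); rewrite -h; ring.
  right; apply: (@eqmodL L _ _ (p * k * w22 * eQ)); rewrite -h; ring.
move=> i j.
apply: (@eqmodL L _ _ (- (Umx s0 s1 i 0 * p * k * l1 * Q 0 j))).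
have key : A i j = (Umx s0 s1 *m D *m (V0 *m Q)) i j
    + Umx s0 s1 i 0 * (p + s0 * x) * l1 * Q 0 j.
  rewrite HA Uent !mul22 !mxE /= /w12 /w22 /x /s0 /p /q0 /r /r1.
  by case: (ord2 i) => ->; case: (ord2 j) => ->; rewrite /= ?mulr1n ?mulr0n Hm; ring.
by rewrite key hx; ring.
Qed.
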